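(* Let $h>0$ and let $f:\mathbb R\to\mathbb R$ be a compactly supported $C^1$ function whose restriction to each interval $(ih,(i+1)h)$, $i\in\mathbb Z$, is a polynomial of degree at most $5$. Then $$\int_{\mathbb R} f(t)\,dt=\sum_{i\in\mathbb Z} h\Big(\tfrac{7}{15}\,f(ih)+\tfrac{8}{15}\,f\big(\tfrac{2i+1}{2}h\big)\Big).$$
   Context: This is the exact quadrature rule for $C^1$ quintic splines with uniform knots $h\mathbb Z$ on the whole real line (two nodes per subinterval: the knots and the midpoints). *)

(* Defs.v *)
From Stdlib Require Import Reals ZArith.
Open Scope R_scope.

Definition zsum (m n : Z) (g : Z -> R) : R :=
  sum_f_R0 (fun k => g (m + Z.of_nat k)%Z) (Z.to_nat (n - m)).

Definition is_C1 (f : R -> R) : Prop :=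
  exists f' : R -> R, continuity f' /\ forall x, derivable_pt_lim f x (f' x).

Definition compact_support (f : R -> R) : Prop :=
  exists a b : R, forall t, (t < a \/ b < t) -> f t = 0.

Definition piecewise_quintic (h : R) (f : R -> R) : Prop :=
  forall i : Z, exists c : nat -> R, forall t,
    IZR i * h < t < IZR (i + 1) * h -> f t = sum_f_R0 (fun k => c k * t ^ k) 5.

(* Main.v *)
Require Import Defs.
From Stdlib Require Import Reals ZArith Lra Lia.
From Coquelicot Require Import Coquelicot.
Open Scope R_scope.

Lemma ceq_left (g1 g2 : R -> R) a b : a < b -> continuity_pt g1 a -> continuity_pt g2 a ->
  (forall t, a < t < b -> g1 t = g2 t) -> g1 a = g2 a.
Proof.
  intros Hab H1 H2 He.
  pose proof (continuity_pt_minus g1 g2 a H1 H2) as Hc.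
  unfold continuity_pt, continue_in, limit1_in, limit_in in Hc. simpl in Hc.
  destruct (Req_dec (g1 a) (g2 a)) as [E|E]; auto. exfalso.
  assert (Hp : 0 < Rabs (g1 a - g2 a)) by (apply Rabs_pos_lt; lra).
  destruct (Hc _ Hp) as [alp [Ha Hx]].
  set (x := a + Rmin alp (b - a) / 2).
  assert (Hm1 : Rmin alp (b-a) <= alp) by apply Rmin_l.
  assert (Hm2 : Rmin alp (b-a) <= b - a) by apply Rmin_r.
  assert (Hm3 : 0 < Rmin alp (b-a)) by (apply Rmin_glb_lt; lra).
  specialize (Hx x). unfold R_dist, D_x, no_cond, minus_fct in Hx.
  rewrite (He x) in Hx by (unfold x; lra).
  assert (Rabs (x - a) < alp) by (unfold x; rewrite Rabs_right; lra).
  assert (Hxa : a <> x) by (unfold x; intro; lra).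
  specialize (Hx (conj (conj I Hxa) H)).
  rewrite Rminus_diag in Hx.
  rewrite Rminus_0_l, Rabs_Ropp in Hx. lra.
Qed.

Lemma ceq_right (g1 g2 : R -> R) a b : a < b -> continuity_pt g1 b -> continuity_pt g2 b ->
  (forall t, a < t < b -> g1 t = g2 t) -> g1 b = g2 b.
Proof.
  intros Hab H1 H2 He.
  pose proof (continuity_pt_minus g1 g2 b H1 H2) as Hc.
  unfold continuity_pt, continue_in, limit1_in, limit_in in Hc. simpl in Hc.
  destruct (Req_dec (g1 b) (g2 b)) as [E|E]; auto. exfalso.
  assert (Hp : 0 < Rabs (g1 b - g2 b)) by (apply Rabs_pos_lt; lra).
  destruct (Hc _ Hp) as [alp [Ha Hx]].
  set (x := b - Rmin alp (b - a) / 2).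
  assert (Hm1 : Rmin alp (b-a) <= alp) by apply Rmin_l.
  assert (Hm2 : Rmin alp (b-a) <= b - a) by apply Rmin_r.
  assert (Hm3 : 0 < Rmin alp (b-a)) by (apply Rmin_glb_lt; lra).
  specialize (Hx x). unfold R_dist, D_x, no_cond, minus_fct in Hx.
  rewrite (He x) in Hx by (unfold x; lra).
  assert (Rabs (x - b) < alp) by (unfold x; rewrite Rabs_left; lra).
  assert (Hxa : b <> x) by (unfold x; intro; lra).
  specialize (Hx (conj (conj I Hxa) H)).
  rewrite Rminus_diag in Hx.
  rewrite Rminus_0_l, Rabs_Ropp in Hx. lra.
Qed.

Lemma loc_int (P : R -> Prop) a b t : a < t < b -> (forall y, a < y < b -> P y) -> locally t P.
Proof.
  intros Ht HP.
  assert (Hm : 0 < Rmin (t - a) (b - t)) by (apply Rmin_glb_lt; lra).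
  exists (mkposreal _ Hm). intros y Hy. apply HP.
  change (Rabs (y - t) < Rmin (t - a) (b - t)) in Hy.
  pose proof (Rmin_l (t-a) (b-t)). pose proof (Rmin_r (t-a) (b-t)).
  apply Rabs_def2 in Hy. lra.
Qed.

Lemma cont_of_der f f' x : derivable_pt_lim f x f' -> continuity_pt f x.
Proof. intro H. apply derivable_continuous_pt. exists f'. exact H. Qed.
Definition Pp (c : nat -> R) t := sum_f_R0 (fun k => c k * t ^ k) 5.
Definition dP (c : nat -> R) t := c 1%nat + 2 * c 2%nat * t + 3 * c 3%nat * t^2 + 4 * c 4%nat * t^3 + 5 * c 5%nat * t^4.
Definition FP (c : nat -> R) t := c 0%nat * t + c 1%nat * t^2/2 + c 2%nat * t^3/3 + c 3%nat * t^4/4 + c 4%nat * t^5/5 + c 5%nat * t^6/6.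

Lemma Pp_der c t : is_derive (Pp c) t (dP c t).
Proof.
  unfold Pp, dP. simpl. auto_derive; auto. ring.
Qed.

Lemma FP_der c t : is_derive (FP c) t (Pp c t).
Proof.
  unfold Pp, FP. simpl. auto_derive; auto. field.
Qed.

Lemma Pp_cont c t : continuity_pt (Pp c) t.
Proof. apply cont_of_der with (dP c t). apply is_derive_Reals, Pp_der. Qed.

Lemma dP_cont c t : continuity_pt (dP c) t.
Proof.
  apply cont_of_der with (2 * c 2%nat + 6 * c 3%nat * t + 12 * c 4%nat * t^2 + 20 * c 5%nat * t^3).
  apply is_derive_Reals. unfold dP. auto_derive; auto. ring.
Qed.

Definition EE h (f f' : R -> R) x := 7 * h / 30 * f x - h^2 / 60 * f' x.

Lemma cell h f f' a c : 0 < h -> (forall x, derivable_pt_lim f x (f' x)) -> continuity f' ->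
  (forall t, a < t < a + h -> f t = Pp c t) ->
  is_RInt f a (a + h) (h * (7/15 * f a + 8/15 * f (a + h/2)) + EE h f f' (a+h) - EE h f f' a).
Proof.
  intros Hh Hd Hc Hp.
  assert (Hder : forall t, a < t < a + h -> f' t = dP c t).
  { intros t Ht.
    assert (H1 : is_derive (Pp c) t (f' t)).
    { apply is_derive_ext_loc with f. apply loc_int with a (a+h); auto.
      apply is_derive_Reals, Hd. }
    apply is_derive_unique in H1. rewrite <- H1.
    apply is_derive_unique, Pp_der. }
  assert (fa : f a = Pp c a).
  { apply ceq_left with (a+h); [lra|apply (cont_of_der f (f' a)), Hd|apply Pp_cont|auto]. }
  assert (fb : f (a+h) = Pp c (a+h)).
  { apply ceq_right with a; [lra|apply (cont_of_der f (f' (a+h))), Hd|apply Pp_cont|auto]. }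
  assert (fm : f (a+h/2) = Pp c (a+h/2)) by (apply Hp; lra).
  assert (f'a : f' a = dP c a).
  { apply ceq_left with (a+h); [lra|apply Hc|apply dP_cont|auto]. }
  assert (f'b : f' (a+h) = dP c (a+h)).
  { apply ceq_right with a; [lra|apply Hc|apply dP_cont|auto]. }
  assert (HI : is_RInt (Pp c) a (a+h) (minus (FP c (a+h)) (FP c a))).
  { apply (is_RInt_derive (FP c) (Pp c)).
    - intros; apply FP_der.
    - intros x _. apply continuity_pt_filterlim, Pp_cont. }
  apply is_RInt_ext with (Pp c).
  { rewrite Rmin_left, Rmax_right by lra. intros x Hx. symmetry; apply Hp; lra. }
  replace (h * (7/15 * f a + 8/15 * f (a + h/2)) + EE h f f' (a+h) - EE h f f' a)
    with (minus (FP c (a+h)) (FP c a)); auto.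
  unfold EE. rewrite fa, fb, fm, f'a, f'b.
  unfold minus, plus, opp; simpl. unfold Pp, FP, dP; simpl. field.
Qed.

Definition gg h (f : R -> R) (i : Z) := h * (7 / 15 * f (IZR i * h) + 8 / 15 * f ((2 * IZR i + 1) / 2 * h)).

Lemma sum_int h f f' m (N : nat) : 0 < h -> (forall x, derivable_pt_lim f x (f' x)) -> continuity f' ->
  piecewise_quintic h f ->
  is_RInt f (IZR m * h) (IZR (m + Z.of_nat N) * h)
    (sum_f_R0 (fun k => gg h f (m + Z.of_nat k)%Z) N - gg h f (m + Z.of_nat N)%Z
     + EE h f f' (IZR (m + Z.of_nat N) * h) - EE h f f' (IZR m * h)).
Proof.
  intros Hh Hd Hc Hq. induction N as [|N IH].
  - simpl. rewrite Z.add_0_r.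
    replace (gg h f m - gg h f m + EE h f f' (IZR m * h) - EE h f f' (IZR m * h)) with (@zero R_NormedModule)
      by (simpl; unfold zero; simpl; ring).
    apply is_RInt_point.
  - set (a := IZR (m + Z.of_nat N) * h).
    destruct (Hq (m + Z.of_nat N)%Z) as [c Hcq].
    assert (HC : is_RInt f a (a + h) (h * (7/15 * f a + 8/15 * f (a + h/2)) + EE h f f' (a+h) - EE h f f' a)).
    { apply cell with c; auto. intros t Ht. apply Hcq. unfold a in Ht. rewrite (plus_IZR (m + Z.of_nat N) 1). replace (IZR 1) with 1 by reflexivity. rewrite Rmult_plus_distr_r, Rmult_1_l. lra. }
    assert (E1 : IZR (m + Z.of_nat (S N)) * h = a + h).
    { unfold a. rewrite Nat2Z.inj_succ, <- Z.add_1_r, Z.add_assoc, plus_IZR. ring. }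
    rewrite E1.
    assert (E2 : gg h f (m + Z.of_nat N)%Z = h * (7/15 * f a + 8/15 * f (a + h/2))).
    { unfold gg, a. f_equal. f_equal. f_equal. f_equal. field. }
    assert (E3 : gg h f (m + Z.of_nat (S N))%Z = gg h f (m + Z.of_nat (S N))%Z) by reflexivity.
    replace (sum_f_R0 (fun k => gg h f (m + Z.of_nat k)%Z) (S N) - gg h f (m + Z.of_nat (S N))%Z +
             EE h f f' (a + h) - EE h f f' (IZR m * h))
      with (plus (sum_f_R0 (fun k => gg h f (m + Z.of_nat k)%Z) N - gg h f (m + Z.of_nat N)%Z
             + EE h f f' a - EE h f f' (IZR m * h))
             (h * (7/15 * f a + 8/15 * f (a + h/2)) + EE h f f' (a+h) - EE h f f' a)).
    + exact (is_RInt_Chasles f _ a _ _ _ IH HC).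
    + unfold plus; simpl. rewrite <- E2. ring.
Qed.

Lemma der_zero f f' a b : (forall x, derivable_pt_lim f x (f' x)) ->
  (forall t, a < t < b -> f t = 0) -> forall t, a < t < b -> f' t = 0.
Proof.
  intros Hd Hz t Ht.
  assert (H1 : is_derive (fun _ => 0) t (f' t)).
  { apply is_derive_ext_loc with f. apply loc_int with a b; auto.
    apply is_derive_Reals, Hd. }
  apply is_derive_unique in H1. rewrite <- H1. apply is_derive_unique. auto_derive; auto.
Qed.

Theorem mainTheorem7 (h : R) (f : R -> R) :
  0 < h -> is_C1 f -> compact_support f -> piecewise_quintic h f ->
  forall m n : Z, (m <= n)%Z ->
    (forall t, t < IZR m * h \/ IZR n * h < t -> f t = 0) ->
    exists pr : Riemann_integrable f (IZR m * h) (IZR n * h),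
      RiemannInt pr =
      zsum m n (fun i => h * (7 / 15 * f (IZR i * h)
                              + 8 / 15 * f ((2 * IZR i + 1) / 2 * h))).
Proof.
  intros Hh [f' [Hc Hd]] _ Hq m n Hmn Hz.
  assert (Hle : IZR m * h <= IZR n * h).
  { apply Rmult_le_compat_r; [lra|apply IZR_le; auto]. }
  exists (@continuity_implies_RiemannInt f _ _ Hle (fun x _ => cont_of_der f (f' x) x (Hd x))).
  rewrite <- RInt_Reals.
  set (N := Z.to_nat (n - m)).
  assert (EN : (m + Z.of_nat N)%Z = n) by (unfold N; rewrite Z2Nat.id; lia).
  pose proof (sum_int h f f' m N Hh Hd Hc Hq) as HS. rewrite EN in HS.
  rewrite (is_RInt_unique _ _ _ _ HS).
  set (a := IZR m * h) in *. set (b := IZR n * h) in *.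
  assert (Za : forall t, a - 1 < t < a -> f t = 0) by (intros; apply Hz; lra).
  assert (Zb : forall t, b < t < b + 1 -> f t = 0) by (intros; apply Hz; lra).
  assert (fa : f a = 0).
  { apply (ceq_right f (fun _ => 0) (a-1) a); [lra|apply (cont_of_der f (f' a)), Hd|apply continuity_pt_const; intros ? ?; auto|auto]. }
  assert (fb : f b = 0).
  { apply (ceq_left f (fun _ => 0) b (b+1)); [lra|apply (cont_of_der f (f' b)), Hd|apply continuity_pt_const; intros ? ?; auto|auto]. }
  assert (f'a : f' a = 0).
  { apply (ceq_right f' (fun _ => 0) (a-1) a); [lra|apply Hc|apply continuity_pt_const; intros ? ?; auto|].
    apply (der_zero f f' (a-1) a); auto. }
  assert (f'b : f' b = 0).
  { apply (ceq_left f' (fun _ => 0) b (b+1)); [lra|apply Hc|apply continuity_pt_const; intros ? ?; auto|].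
    apply (der_zero f f' b (b+1)); auto. }
  assert (gn : gg h f n = 0).
  { unfold gg. fold b. rewrite fb, (Hz ((2 * IZR n + 1) / 2 * h)). ring.
    right. unfold b. nra. }
  unfold zsum. fold N. unfold EE. rewrite gn, fa, fb, f'a, f'b.
  unfold gg. ring.
Qed.
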